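(* Let $L$ be a component of a $T^*$-colored link diagram whose labels lie in $\{\pm i,\pm j,\pm k\}\cup\{\tfrac{1\pm i\pm j\pm k}{2}\}$. For a basepoint $b$ on an arc of $L$, let $n$ be the order of $\chi(b)$ and let $Q'(L,b)\in\mathbb{Z}_n$ be the exponent with $q(L,b)=\chi(b)^{Q'(L,b)}$. Then $Q'(L,b)$ does not depend on the choice of the basepoint $b$ on $L$.
   Context: $T^*=\{\pm1,\pm i,\pm j,\pm k,\tfrac{\pm1\pm i\pm j\pm k}{2}\}$ is the binary tetrahedral group (unit quaternions, all sign combinations). A $T^*$-colored link diagram is an oriented diagram of a tame link $\mathcal L\subset\mathbb{R}^3$ together with a homomorphism $\phi:\pi_1(\mathbb{R}^3\setminus\mathcal L)\to T^*$, in which each arc carries the label $\phi(m_a)$ of its Wirtinger meridian (with respect to a basepoint above the projection plane and the orientation of the arc); $\chi(b)$ denotes the label of the arc containing $b$. All labels on a component are conjugate, and all labels on $L$ have the same order $n$. At each crossing $c$ where a component passes under an over-arc with label $g$, with incoming under-arc label $x$ and outgoing label $x'$, the Wirtinger relation $x'=g^{\varepsilon_c}xg^{-\varepsilon_c}$ holds, $\varepsilon_c\in\{\pm1\}$ determined by the sign of the crossing. Traversing $L$ from $b$ along its orientation, let $c_1,\dots,c_m$ be the successive crossings where $L$ passes under an arc whose label is not $-1$, with over-arc labels $g_1,\dots,g_m$, and set $q(L,b)=g_m^{\varepsilon_{c_m}}\cdots g_1^{\varepsilon_{c_1}}$. For such $\chi(b)$, $q(L,b)$ is a power of $\chi(b)$,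 so $Q'(L,b)$ (the discrete logarithm of $q(L,b)$ to base $\chi(b)$) is a well-defined element of $\mathbb{Z}_n$. *)

(* Defs.v *)
From HB Require Import structures.
From mathcomp Require Import all_boot all_order all_algebra.
Set Implicit Arguments. Unset Strict Implicit. Unset Printing Implicit Defensive.
Import Order.TTheory GRing.Theory Num.Theory.
Local Open Scope ring_scope.

(* x = ((re, i), (j, k)) stands for re + i*i + j*j + k*k. *)
Definition quat := ((rat * rat) * (rat * rat))%type.
Definition Qt (a b c d : rat) : quat := ((a, b), (c, d)).
Definition qre (x : quat) := x.1.1.
Definition qim (x : quat) := x.1.2.
Definition qjm (x : quat) := x.2.1.
Definition qkm (x : quat) := x.2.2.

Definition qone : quat := Qt 1 0 0 0.
Definition qmone : quat := Qt (-1) 0 0 0.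

Definition qmul (x y : quat) : quat :=
  let: (a1, b1, c1, d1) := (qre x, qim x, qjm x, qkm x) in
  let: (a2, b2, c2, d2) := (qre y, qim y, qjm y, qkm y) in
  Qt (a1*a2 - b1*b2 - c1*c2 - d1*d2)
     (a1*b2 + b1*a2 + c1*d2 - d1*c2)
     (a1*c2 - b1*d2 + c1*a2 + d1*b2)
     (a1*d2 + b1*c2 - c1*b2 + d1*a2).

Definition qnorm2 (x : quat) : rat :=
  qre x ^+ 2 + qim x ^+ 2 + qjm x ^+ 2 + qkm x ^+ 2.

Definition qinv (x : quat) : quat :=
  let n := qnorm2 x in
  Qt (qre x / n) (- qim x / n) (- qjm x / n) (- qkm x / n).

Definition qpow (x : quat) (k : nat) : quat := iter k (qmul x) qone.

Definition is_pm1 (r : rat) : bool := (r == 1) || (r == -1).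
Definition is_pmhalf (r : rat) : bool := (r == 2^-1) || (r == - 2^-1).

Definition in_Tstar (x : quat) : bool :=
  [|| [&& is_pm1 (qre x), qim x == 0, qjm x == 0 & qkm x == 0],
      [&& qre x == 0, is_pm1 (qim x), qjm x == 0 & qkm x == 0],
      [&& qre x == 0, qim x == 0, is_pm1 (qjm x) & qkm x == 0],
      [&& qre x == 0, qim x == 0, qjm x == 0 & is_pm1 (qkm x)]
    | [&& is_pmhalf (qre x), is_pmhalf (qim x), is_pmhalf (qjm x)
        & is_pmhalf (qkm x)]].

Definition in_labelset (x : quat) : bool :=
  [|| [&& qre x == 0, is_pm1 (qim x), qjm x == 0 & qkm x == 0],
      [&& qre x == 0, qim x == 0, is_pm1 (qjm x) & qkm x == 0],
      [&& qre x == 0, qim x == 0, qjm x == 0 & is_pm1 (qkm x)]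
    | [&& qre x == 2^-1, is_pmhalf (qim x), is_pmhalf (qjm x)
        & is_pmhalf (qkm x)]].

(* order of an element of T* : least k >= 1 with x^k = 1
   (every element of T* has order dividing 24) *)
Definition qorder (x : quat) : nat :=
  (find (fun k => qpow x k.+1 == qone) (iota 0 24)).+1.

(* Arcs of type A, crossings of type C.  At crossing c the over-arc is
   [over c]; the under-strand arrives along arc [uin c] and leaves along
   arc [uout c]; [sgn c] is true iff epsilon_c = +1. *)
Record diagram (A C : finType) := Diagram {
  over : C -> A;
  uin  : C -> A;
  uout : C -> A;
  sgn  : C -> bool
}.

(* Well-formedness: each arc ends at most at one undercrossing and starts
   at most at one undercrossing, and an arc ends at an undercrossing iff it
   starts at one (otherwise it is a closed crossing-free loop component). *)
Definition wf_diagram (A C : finType) (D : diagram A C) : Prop :=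
  [/\ injective (uin D), injective (uout D) &
      forall a : A, [exists c, uin D c == a] = [exists c, uout D c == a]].

(* the undercrossing where arc a ends (None for a crossing-free loop) *)
Definition endc (A C : finType) (D : diagram A C) (a : A) : option C :=
  [pick c | uin D c == a].

Definition nextarc (A C : finType) (D : diagram A C) (a : A) : A :=
  if endc D a is Some c then uout D c else a.

Definition hcross (A C : finType) (D : diagram A C) (col : A -> quat)
  (c : C) : quat :=
  if sgn D c then col (over D c) else qinv (col (over D c)).

(* T*-coloring: labels in T* satisfying the Wirtinger relations
   x' = g^eps x g^{-eps} at every crossing (equivalently, a homomorphism
   from the link group via the Wirtinger presentation). *)
Definition Tstar_coloring (A C : finType) (D : diagram A C)
  (col : A -> quat) : Prop :=
  (forall a, in_Tstar (col a)) /\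
  (forall c, col (uout D c) =
     qmul (qmul (hcross D col c) (col (uin D c))) (qinv (hcross D col c))).

(* q(L,b) for a basepoint b on arc a: traverse the component from a,
   listing successive undercrossings c_1, ..., c_m whose over-arc label is
   not -1, and form g_m^{eps_m} ... g_1^{eps_1}. *)
Definition qLb (A C : finType) (D : diagram A C) (col : A -> quat)
  (a : A) : quat :=
  foldl (fun acc k =>
           match endc D (iter k (nextarc D) a) with
           | Some c => if col (over D c) == qmone then acc
                       else qmul (hcross D col c) acc
           | None => acc
           end)
        qone (iota 0 (order (nextarc D) a)).

(* Q'(L,b) in Z_n, n = order of chi(b), represented by its canonical
   representative in {0, ..., n-1}: the least k < n with q(L,b) = chi(b)^k. *)
Definition Qprime (A C : finType) (D : diagram A C) (col : A -> quat)
  (a : A) : nat :=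
  find (fun k => qLb D col a == qpow (col a) k) (iota 0 (qorder (col a))).

(* Main.v *)
Require Import Defs.
From mathcomp Require Import all_boot all_order all_algebra.
From mathcomp Require Import ring.
Import GRing.Theory Num.Theory.

Section Aux.
Local Open Scope ring_scope.

Ltac qcase x := let a := fresh "a" in let b := fresh "b" in
  let c := fresh "c" in let d := fresh "d" in case: x => [[a b] [c d]].

Lemma qmulA x y z : qmul x (qmul y z) = qmul (qmul x y) z.
Proof. qcase x; qcase y; qcase z.
rewrite /qmul /Qt /qre /qim /qjm /qkm /=. congr ((_,_),(_,_)); ring. Qed.

Lemma qmul1q x : qmul qone x = x.
Proof. qcase x. rewrite /qmul /qone /Qt /qre /qim /qjm /qkm /=.
congr ((_,_),(_,_)); ring. Qed.

Lemma qmulq1 x : qmul x qone = x.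
Proof. qcase x. rewrite /qmul /qone /Qt /qre /qim /qjm /qkm /=.
congr ((_,_),(_,_)); ring. Qed.

Lemma qmulV g : qnorm2 g = 1 -> qmul g (qinv g) = qone.
Proof. qcase g. rewrite /qinv /qnorm2 /qmul /qone /Qt /qre /qim /qjm /qkm /= => hn.
rewrite hn !divr1; congr ((_,_),(_,_)); try ring. rewrite -{}hn; ring. Qed.

Lemma qmulVq g : qnorm2 g = 1 -> qmul (qinv g) g = qone.
Proof. qcase g. rewrite /qinv /qnorm2 /qmul /qone /Qt /qre /qim /qjm /qkm /= => hn.
rewrite hn !divr1; congr ((_,_),(_,_)); try ring. rewrite -{}hn; ring. Qed.

Lemma qnorm_inv g : qnorm2 g = 1 -> qnorm2 (qinv g) = 1.
Proof. qcase g. rewrite /qinv /qnorm2 /Qt /qre /qim /qjm /qkm /= => hn.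
rewrite hn !divr1 -{}hn; ring. Qed.

Lemma sq_pm1 {r : rat} : is_pm1 r -> r ^+ 2 = 1.
Proof. by case/orP => /eqP ->; vm_compute. Qed.
Lemma sq_half {r : rat} : is_pmhalf r -> r ^+ 2 = 4^-1.
Proof. by case/orP => /eqP ->; vm_compute. Qed.
Lemma sq_0 {r : rat} : r == 0 -> r ^+ 2 = 0.
Proof. by move/eqP ->; vm_compute. Qed.

Lemma Tstar_norm x : in_Tstar x -> qnorm2 x = 1.
Proof.
rewrite /in_Tstar /qnorm2.
case/orP => [|/orP [|/orP [|/orP []]]] /and4P [h1 h2 h3 h4].
- by rewrite (sq_pm1 h1) (sq_0 h2) (sq_0 h3) (sq_0 h4); vm_compute.
- by rewrite (sq_0 h1) (sq_pm1 h2) (sq_0 h3) (sq_0 h4); vm_compute.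
- by rewrite (sq_0 h1) (sq_0 h2) (sq_pm1 h3) (sq_0 h4); vm_compute.
- by rewrite (sq_0 h1) (sq_0 h2) (sq_0 h3) (sq_pm1 h4); vm_compute.
- by rewrite (sq_half h1) (sq_half h2) (sq_half h3) (sq_half h4); vm_compute.
Qed.

Definition cj g y := qmul (qmul g y) (qinv g).

Lemma cjM g y z : qnorm2 g = 1 -> cj g (qmul y z) = qmul (cj g y) (cj g z).
Proof.
move=> N; rewrite /cj -!qmulA [qmul (qinv g) (qmul g _)]qmulA qmulVq // qmul1q.
by [].
Qed.

Lemma cj1 g : qnorm2 g = 1 -> cj g qone = qone.
Proof. by move=> N; rewrite /cj qmulq1 qmulV. Qed.

Lemma cjX g x k : qnorm2 g = 1 -> qpow (cj g x) k = cj g (qpow x k).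
Proof.
move=> N; elim: k => [|k IH]; first by rewrite /qpow /= cj1.
by rewrite /qpow iterS -/(qpow _ k) IH -cjM.
Qed.

Lemma cjK g y : qnorm2 g = 1 -> qmul (qmul (qinv g) (cj g y)) g = y.
Proof.
move=> N; rewrite /cj -!qmulA qmulVq // qmulq1 !qmulA qmulVq // qmul1q //.
Qed.

Lemma cj_eq g y z : qnorm2 g = 1 -> (cj g y == cj g z) = (y == z).
Proof.
move=> N; apply/eqP/eqP => [h|->] //.
by rewrite -(@cjK g y N) h cjK.
Qed.

Lemma cj_mone x : cj qmone x = x.
Proof. rewrite /cj (_ : qinv qmone = qmone); last by vm_compute.
qcase x. rewrite /qmul /qmone /Qt /qre /qim /qjm /qkm /=.
congr ((_,_),(_,_)); ring. Qed.

Lemma cj_one x : cj qone x = x.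
Proof. rewrite /cj (_ : qinv qone = qone); last by vm_compute.
by rewrite qmul1q qmulq1. Qed.

Definition FG (G : nat -> quat) (acc : quat) (k : nat) := qmul (G k) acc.

Lemma foldl_ext (T : Type) (f1 f2 : quat -> T -> quat) z s :
  (forall acc k, f1 acc k = f2 acc k) -> foldl f1 z s = foldl f2 z s.
Proof. move=> h; elim: s z => [|x s IH] z //=. by rewrite h IH. Qed.

Lemma foldl_shift G z s :
  foldl (FG G) z s = qmul (foldl (FG G) qone s) z.
Proof.
elim: s z => [|x s IH] z /=; first by rewrite qmul1q.
by rewrite IH [in RHS]IH /FG qmulq1 qmulA.
Qed.

Lemma foldl_succ G z s n :
  foldl (FG (fun k => G k.+1)) z (iota s n) = foldl (FG G) z (iota s.+1 n).
Proof. by elim: n s z => [|n IH] s z //=; rewrite IH. Qed.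

Lemma qorder_cj g x : qnorm2 g = 1 -> qorder (cj g x) = qorder x.
Proof.
move=> N.
have E : (fun k => qpow (cj g x) k.+1 == qone) =1 (fun k => qpow x k.+1 == qone).
  by move=> k; rewrite (@cjX g x k.+1 N) -[X in _ == X](@cj1 g N) cj_eq.
by rewrite /qorder (eq_find E).
Qed.

Variables (A C : finType) (D : diagram A C) (col : A -> quat).
Hypothesis wfD : wf_diagram D.
Hypothesis colD : Tstar_coloring D col.

Lemma nextarc_inj : injective (nextarc D).
Proof.
case: wfD => inj_in inj_out hex.
move=> x y; rewrite /nextarc /endc.
case: (pickP (fun c => uin D c == x)) => [cx /eqP hx | nx];
case: (pickP (fun c => uin D c == y)) => [cy /eqP hy | ny] //.
- by move/inj_out => e; rewrite -hx -hy e.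
- move=> e; have: [exists c, uout D c == y] by apply/existsP; exists cx; rewrite e.
  by rewrite -hex => /existsP [c /eqP hc]; move: (ny c); rewrite hc eqxx.
- move=> e; have: [exists c, uout D c == x] by apply/existsP; exists cy; rewrite e.
  by rewrite -hex => /existsP [c /eqP hc]; move: (nx c); rewrite hc eqxx.
Qed.

Definition stepg (x : A) : quat :=
  match endc D x with
  | Some c => if col (Defs.over D c) == qmone then qone else hcross D col c
  | None => qone
  end.

Lemma hcross_norm c : qnorm2 (hcross D col c) = 1.
Proof.
case: colD => hT _; rewrite /hcross; case: (sgn D c); first exact: Tstar_norm.
by apply: qnorm_inv; apply: Tstar_norm.
Qed.

Lemma stepg_norm x : qnorm2 (stepg x) = 1.
Proof.
rewrite /stepg; case: (endc D x) => [c|]; last by vm_compute.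
case: ifP => _; [by vm_compute | exact: hcross_norm].
Qed.

Lemma col_next x : col (nextarc D x) = cj (stepg x) (col x).
Proof.
case: colD => _ hW.
rewrite /nextarc /stepg; case E: (endc D x) => [c|]; last by rewrite cj_one.
have hc : uin D c = x.
  by move: E; rewrite /endc; case: pickP => // c' /eqP h [<-].
rewrite hW hc -/(cj _ _); case: ifP => // /eqP hm.
have -> : hcross D col c = qmone.
  by rewrite /hcross hm; case: (sgn D c) => //; vm_compute.
by rewrite cj_mone cj_one.
Qed.

Lemma qLbE x : qLb D col x =
  foldl (FG (fun k => stepg (iter k (nextarc D) x))) qone
        (iota 0 (order (nextarc D) x)).
Proof.
rewrite /qLb; apply: foldl_ext => acc k; rewrite /FG /stepg.
case: (endc D _) => [c|]; last by rewrite qmul1q.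
by case: ifP => _ //; rewrite qmul1q.
Qed.

Lemma qLb_next x : qLb D col (nextarc D x) = cj (stepg x) (qLb D col x).
Proof.
set f := nextarc D.
have injf : injective f by exact: nextarc_inj.
have Hord : order f (f x) = order f x by apply: order_id_cycle; exact: cycle_orbit.
rewrite !qLbE Hord.
rewrite (@foldl_ext _ _ (FG (fun k => stepg (iter k.+1 f x)))); last first.
  by move=> acc k; rewrite /FG iterSr.
rewrite -/f (foldl_succ (fun k => stepg (iter k f x))).
have [m' Hm] : exists m', order f x = m'.+1 by exists (order f x).-1; rewrite orderSpred.
have Hit : iter m'.+1 f x = x by rewrite -Hm iter_order.
rewrite Hm (_ : iota 1 m'.+1 = rcons (iota 1 m') m'.+1); last first.
  by rewrite -cats1 -(addn1 m') iotaD add1n addn1.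
rewrite foldl_rcons /= {1}/FG Hit.
rewrite (foldl_shift _ (FG _ _ _)) /FG /= qmulq1.
set P := foldl _ qone _.
by rewrite /cj -!qmulA qmulV ?stepg_norm // qmulq1.
Qed.

Lemma Qprime_next x : Qprime D col (nextarc D x) = Qprime D col x.
Proof.
rewrite /Qprime col_next qLb_next qorder_cj ?stepg_norm //.
apply: eq_find => k; by rewrite cjX ?stepg_norm // cj_eq ?stepg_norm.
Qed.

End Aux.

Theorem mainTheorem3 (A C : finType) (D : diagram A C) (col : A -> quat) :
  wf_diagram D -> Tstar_coloring D col ->
  forall a : A,
  (forall x : A, fconnect (nextarc D) a x -> in_labelset (col x)) ->
  forall b : A, fconnect (nextarc D) a b ->
  Qprime D col a = Qprime D col b.
Proof.
move=> wf cl a _ b /iter_findex <-.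
elim: (findex _ a b) => [|n IH] //=.
by rewrite Qprime_next.
Qed.
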